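(* Let $V=(v_1,\dots,v_D)$ be a non-increasing sequence of positive integers. If $\mathcal T$ is a $V$-regular rooted tree with depth $k$, then $\mathcal T$ is isomorphic to $\mathcal T_V^k$.
   Context: A rooted tree is a directed tree whose edges all point toward the root; its depth is the maximal distance of a vertex to the root. A vertex $c$ is a $k$-distant predecessor of $b$ if $c$ is at distance $k$ from $b$, i.e. there is a directed path of length $k$ from $c$ to $b$. With $v_i=v_D$ for all $i\ge D$, a directed graph is $V$-regular if for every positive integer $k$ and every vertex, the number of $k$-distant predecessors of that vertex is either $0$ or $v_1\cdots v_k$. Put $v_i=v_D$ for $i\ge D+1$; $\bullet$ is the one-vertex tree; for rooted trees $\mathcal T_1,\dots,\mathcal T_s$, $\langle\mathcal T_1\oplus\dots\oplus\mathcal T_s\rangle$ is the rooted tree whose root's children are roots of copies of $\mathcal T_1,\dots,\mathcal T_s$, and $k\times\mathcal T$ denotes $k$ disjoint copies of $\mathcal T$. Define $\mathcal T_V^0=\bullet$ and $\mathcal T_V^k=\big\langle v_k\times\mathcal T_V^{k-1}\oplus\bigoplus_{i=1}^{k-1}(v_i-v_{i+1})\times\mathcal T_V^{i-1}\big\rangle$ for $k\ge1$. *)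

(* Defs.v *)
From mathcomp Require Import all_boot.
Set Implicit Arguments. Unset Strict Implicit. Unset Printing Implicit Defensive.

Fixpoint dpath (T : finType) (e : rel T) (k : nat) (c b : T) : bool :=
  match k with
  | 0 => c == b
  | k'.+1 => [exists y, e c y && dpath e k' y b]
  end.

Definition kpreds (T : finType) (e : rel T) (k : nat) (b : T) : {set T} :=
  [set c | dpath e k c b].

(* A rooted tree with root r, all edges pointing toward the root:
   the root has no out-edge, every other vertex has exactly one out-edge
   (to its parent), and every vertex has a directed path to the root. *)
Definition rooted_tree (T : finType) (e : rel T) (r : T) : Prop :=
  [/\ forall y, ~~ e r y,
      forall x, x != r -> exists! y, e x y
    & forall x, connect e x r].

Definition depth_is (T : finType) (e : rel T) (r : T) (k : nat) : Prop :=
  (exists c, dpath e k c r) /\ (forall c j, dpath e j c r -> j <= k).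

(* ---------- The sequence V = (v_1,...,v_D), with v_i = v_D for i >= D ---------- *)
Definition vv (V : seq nat) (i : nat) : nat := nth (last 0 V) V i.-1.

Definition nonincr_pos_seq (V : seq nat) : Prop :=
  [/\ V != [::], all (fun x => 0 < x) V & sorted geq V].

Definition V_regular (V : seq nat) (T : finType) (e : rel T) : Prop :=
  forall k, 0 < k -> forall b : T,
    #|kpreds e k b| = 0 \/ #|kpreds e k b| = \prod_(1 <= i < k.+1) vv V i.

Inductive rtree := RNode of seq rtree.
Definition leaf := RNode [::].

(* vertices of an rtree, as addresses (paths of child indices from the root) *)
Fixpoint addrs (t : rtree) : seq (seq nat) :=
  match t with
  | RNode ts =>
      [::] :: (fix F (i : nat) (ts : seq rtree) : seq (seq nat) :=
                 match ts with
                 | [::] => [::]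
                 | t' :: ts' => map (cons i) (addrs t') ++ F i.+1 ts'
                 end) 0 ts
  end.

Definition rvert (t : rtree) : finType := seq_sub (addrs t).

(* edge from a vertex to its parent (edges point toward the root [::]) *)
Definition redge (t : rtree) : rel (rvert t) :=
  fun a b => (val a != [::]) && (val b == take (size (val a)).-1 (val a)).

(* T_V^0, ..., T_V^k; the children of the root of T_V^k are
   v_k copies of T_V^(k-1) and (v_i - v_(i+1)) copies of T_V^(i-1), 1 <= i <= k-1 *)
Definition TV_children (V : seq nat) (k : nat) (s : seq rtree) : seq rtree :=
  nseq (vv V k) (nth leaf s k.-1) ++
  flatten [seq nseq (vv V i - vv V i.+1) (nth leaf s i.-1) | i <- iota 1 k.-1].

Fixpoint TVs (V : seq nat) (k : nat) : seq rtree :=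
  match k with
  | 0 => [:: leaf]
  | k'.+1 => rcons (TVs V k') (RNode (TV_children V k'.+1 (TVs V k')))
  end.

Definition TV (V : seq nat) (k : nat) : rtree := nth leaf (TVs V k) k.

Definition rtree_iso (T : finType) (e : rel T) (r : T) (t : rtree) : Prop :=
  exists f : T -> rvert t,
    [/\ bijective f, val (f r) = [::] & forall x y, e x y = redge (f x) (f y)].

(* Main.v *)
Require Import Defs.
From mathcomp Require Import all_boot.
From mathcomp Require Import zify.
Set Implicit Arguments. Unset Strict Implicit. Unset Printing Implicit Defensive.

Fixpoint Faux (i : nat) (ts : seq rtree) : seq (seq nat) :=
  match ts with
  | [::] => [::]
  | t' :: ts' => map (cons i) (addrs t') ++ Faux i.+1 ts'
  end.
Lemma addrsE ts : addrs (RNode ts) = [::] :: Faux 0 ts.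
Proof. reflexivity. Qed.

Lemma mem_Faux ts m i a :
  (i :: a \in Faux m ts) = (m <= i < m + size ts) && (a \in addrs (nth leaf ts (i - m))).
Proof.
elim: ts m => [|t ts IH] m /=; first by rewrite addn0; case: ltnP => //= H; rewrite leqNgt H.
rewrite mem_cat IH; case: (ltngtP i m) => Him /=.
- by rewrite orbF; apply/negbTE/mapP => -[x _ [E _]]; lia.
- have -> : i - m = (i - m.+1).+1 by lia.
  have -> : (i :: a \in [seq m :: x | x <- addrs t]) = false.
    by apply/negbTE/mapP => -[x _ [E _]]; lia.
  by rewrite /= addSnnS.
- subst i; rewrite subnn /= orbF addnS ltnS leq_addr /=.
  by rewrite mem_map //; move=> x y [].
Qed.

Lemma mem_addrs ts i a :
  (i :: a \in addrs (RNode ts)) = (i < size ts) && (a \in addrs (nth leaf ts i)).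
Proof. by rewrite addrsE in_cons /= mem_Faux subn0. Qed.

Lemma nil_addrs t : [::] \in addrs t.
Proof. by case: t => ts; rewrite addrsE mem_head. Qed.

Lemma dpath_add (T : finType) (e : rel T) i j c b :
  dpath e (i + j) c b = [exists z, dpath e i c z && dpath e j z b].
Proof.
elim: i c => [|i IH] c /=.
  apply/idP/existsP => [H|[z /andP[/eqP -> //]]]; by exists c; rewrite eqxx.
apply/existsP/existsP => [[y /andP[ecy]]|[z /andP[/existsP[y /andP[ecy p1]] p2]]].
  rewrite IH => /existsP[z /andP[p1 p2]]; exists z; rewrite p2 andbT.
  by apply/existsP; exists y; rewrite ecy.
by exists y; rewrite ecy IH; apply/existsP; exists z; rewrite p1.
Qed.

Lemma connect_dpath (T : finType) (e : rel T) x y :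
  connect e x y -> exists j, dpath e j x y.
Proof.
move/connectP=> [p]; elim: p x => [|z p IH] x /=; first by move=> _ ->; exists 0; rewrite /= eqxx.
move=> /andP[exz pp] Hl; have [j Hj] := IH _ pp Hl.
by exists j.+1; apply/existsP; exists z; rewrite exz.
Qed.

Lemma size_TVs V n : size (TVs V n) = n.+1.
Proof. by elim: n => //= n IH; rewrite size_rcons IH. Qed.

Lemma nth_TVs V n i : i <= n -> nth leaf (TVs V n) i = TV V i.
Proof.
elim: n => [|n IH]; first by rewrite leqn0 => /eqP ->.
rewrite leq_eqVlt => /orP[/eqP -> //|Hi].
by rewrite /= nth_rcons size_TVs Hi IH.
Qed.

Definition thl V H := if H is 0 then [::] else
  nseq (vv V H) H.-1 ++ flatten [seq nseq (vv V i - vv V i.+1) i.-1 | i <- iota 1 H.-1].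

Lemma TV_eq V H : TV V H = RNode (map (TV V) (thl V H)).
Proof.
case: H => [//|H].
rewrite /TV /= nth_rcons size_TVs ltnn eqxx /TV_children /=.
rewrite map_cat map_nseq nth_TVs // /TV; congr (RNode (_ ++ _)).
rewrite map_flatten -map_comp; congr flatten; apply/eq_in_map => i.
rewrite mem_iota => /andP[H1 H2] /=; rewrite map_nseq nth_TVs //; lia.
Qed.

Lemma last_in (s : seq nat) : s != [::] -> last 0 s \in s.
Proof. by case: s => // a s _; exact: mem_last. Qed.

Lemma code_le ka kb ra rb N : ra < N -> rb < N -> ka * N + ra <= kb * N + rb -> ka <= kb.
Proof. nia. Qed.

Lemma count_split (s : seq nat) g :
  count (fun t => g <= t) s = count (pred1 g) s + count (fun t => g < t) s.
Proof.
elim: s => //= t s ->; rewrite leq_eqVlt eq_sym.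
case: ltngtP => H /=; lia.
Qed.

Lemma count_fl V g n :
  count (pred1 g) (flatten [seq nseq (vv V i - vv V i.+1) i.-1 | i <- iota 1 n])
  = (g < n) * (vv V g.+1 - vv V g.+2).
Proof.
elim: n => [//|n IH].
rewrite (_ : iota 1 n.+1 = iota 1 n ++ [:: n.+1]); last by rewrite -[n.+1]addn1 iotaD addnC.
rewrite (map_cat (fun i => nseq (vv V i - vv V i.+1) i.-1)) flatten_cat count_cat IH /= cats0 count_nseq /=.
case: (ltngtP g n) => H /=; [lia|lia|subst; lia].
Qed.

Lemma count_thl V g H :
  count (pred1 g) (thl V H) = (g < H) * vv V g.+1 - (g.+1 < H) * vv V g.+2.
Proof.
case: H => [//|H]; rewrite /thl /= count_cat count_nseq count_fl /=.
rewrite eq_sym !ltnS; case: (ltngtP g H) => E /=; [lia|lia|subst; lia].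
Qed.

Definition keyH H g := if g.+1 == H then 0 else g.+1.
Definition keyinv H c := if c == 0 then H.-1 else c.-1.
Lemma keyK H g : g < H -> keyinv H (keyH H g) = g.
Proof. by rewrite /keyH /keyinv; case: (g.+1 =P H) => [<-|N] //=. Qed.

Lemma path_nseq n s x0 : x0 <= s -> path leq x0 (nseq n s).
Proof. by elim: n x0 => //= n IH x0 H; rewrite H IH. Qed.

Lemma last_nseq_le n s x0 : x0 <= s -> last x0 (nseq n s) <= s.
Proof. by elim: n x0 => //= n IH x0 _; exact: IH. Qed.

Lemma path_blocks (c : nat -> nat) m s x0 :
  x0 <= s -> path leq x0 (flatten [seq nseq (c i) i | i <- iota s m]).
Proof.
elim: m s x0 => [//|m IH] s x0 H /=; rewrite cat_path path_nseq //=.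
apply: IH; have := last_nseq_le (c s) H; lia.
Qed.

Lemma sorted_keys_thl V H : sorted leq (map (keyH H) (thl V H)).
Proof.
case: H => [//|H]; rewrite /thl /= map_cat map_nseq /keyH eqxx map_flatten -map_comp.
rewrite (_ : map _ (iota 1 H) = [seq nseq (vv V i - vv V i.+1) i | i <- iota 1 H]); last first.
  apply/eq_in_map => i; rewrite mem_iota => /andP[H1 H2] /=; rewrite map_nseq.
  have -> : i.-1.+1 = i by lia.
  by have -> : (i == H.+1) = false by lia.
apply: (@path_sorted _ _ 0); rewrite cat_path path_nseq //=.
apply: path_blocks; have := @last_nseq_le (vv V H.+1) 0 0 (leqnn 0); lia.
Qed.

Lemma sum_count (T : eqType) (s : seq T) (a : pred T) : \sum_(y <- s) (a y : nat) = count a s.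
Proof. by elim: s => [|y s IH]; rewrite ?big_nil ?big_cons ?IH. Qed.

Lemma card_sum (T : finType) (P : pred T) : #|[set c | P c]| = \sum_c (P c : nat).
Proof. by rewrite -sum1dep_card big_mkcond /=; apply: eq_bigr => c _; case: (P c). Qed.

Lemma dpath1 (T : finType) (e : rel T) a b : dpath e 1 a b = e a b.
Proof. by apply/existsP/idP => [[y /andP[H /eqP <-]]//|H]; exists b; rewrite H eqxx. Qed.

Section Main.
Variables (V : seq nat) (T : finType) (e : rel T) (r : T) (k : nat).
Hypothesis HV : nonincr_pos_seq V.
Hypothesis Htree : rooted_tree e r.
Hypothesis Hreg : V_regular V e.
Hypothesis Hdep : depth_is e r k.

Lemma root_noedge y : e r y = false.
Proof. by case: Htree => H _ _; apply/negbTE. Qed.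

Definition par x := odflt x [pick y | e x y].

Lemma par_edge x : x != r -> e x (par x).
Proof.
case: Htree => _ H _ /H [y [exy _]]; rewrite /par.
by case: pickP => [z -> //|/(_ y)]; rewrite exy.
Qed.

Lemma edge_neq x y : e x y -> x != r.
Proof. by apply: contraTneq => ->; rewrite root_noedge. Qed.

Lemma edge_par x y : e x y -> y = par x.
Proof.
move=> exy; have xr := edge_neq exy.
case: Htree => _ H _; have [z [_ U]] := H x xr.
by rewrite -(U _ exy) -(U _ (par_edge xr)).
Qed.

Lemma dpathS j c b : dpath e j.+1 c b = (c != r) && dpath e j (par c) b.
Proof.
apply/existsP/andP => [[y /andP[ecy p]]|[cr p]].
  by rewrite (edge_neq ecy) -(edge_par ecy).
by exists (par c); rewrite par_edge.
Qed.

Lemma dpath_iter j c y : dpath e j c y -> y = iter j par c.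
Proof.
elim: j c => [|j IH] c; first by move/eqP.
by rewrite dpathS iterSr => /andP[_ /IH].
Qed.

Lemma dpath_r_uniq i j x : dpath e i x r -> dpath e j x r -> i = j.
Proof.
elim: i j x => [|i IH] [|j] x //.
- by move=> /eqP ->; rewrite dpathS eqxx.
- by rewrite dpathS => /andP[/negbTE xr _] /eqP E; rewrite E eqxx in xr.
- by rewrite !dpathS => /andP[_ p1] /andP[_ p2]; rewrite (IH _ _ p1 p2).
Qed.

Lemma dep_ex x : exists j, dpath e j x r.
Proof. case: Htree => _ _ H; exact: connect_dpath (H x). Qed.

Definition dep x := ex_minn (dep_ex x).

Lemma dpath_dep x j : dpath e j x r = (j == dep x).
Proof.
rewrite /dep; case: ex_minnP => d Hd _.
apply/idP/eqP => [H|->//]; exact: dpath_r_uniq H Hd.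
Qed.

Lemma dep_r : dep r = 0.
Proof. by apply/esym/eqP; rewrite -dpath_dep /= eqxx. Qed.

Lemma dep0 x : dep x = 0 -> x = r.
Proof. by move=> H; apply/eqP; have := dpath_dep x 0; rewrite H eqxx. Qed.

Lemma depS x : x != r -> dep x = (dep (par x)).+1.
Proof. by move=> xr; apply/eqP; rewrite eq_sym -dpath_dep dpathS xr /= dpath_dep eqxx. Qed.

Lemma h_ex x : exists j, [exists c, dpath e j c x].
Proof. by exists 0; apply/existsP; exists x; rewrite /= eqxx. Qed.

Lemma h_ub x j : [exists c, dpath e j c x] -> j <= k.
Proof.
case/existsP=> c p; case: Hdep => _ Hk.
have : dpath e (j + dep x) c r.
  by rewrite dpath_add; apply/existsP; exists x; rewrite p dpath_dep eqxx.
move/Hk; lia.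
Qed.

Definition h x := ex_maxn (h_ex x) (@h_ub x).

Lemma h_max x j c : dpath e j c x -> j <= h x.
Proof. move=> p; rewrite /h; case: ex_maxnP => i _ M; apply: M; apply/existsP; by exists c. Qed.

Lemma h_att x j : j <= h x -> exists c, dpath e j c x.
Proof.
rewrite /h; case: ex_maxnP => i /existsP[c p] _ ji.
move: p; rewrite -(subnK ji) dpath_add => /existsP[z /andP[_ q]]; by exists z.
Qed.

Definition Pv j := \prod_(1 <= i < j.+1) vv V i.

Lemma vv_pos i : 0 < vv V i.
Proof.
case: HV => Hne Hpos _; rewrite /vv.
case: (ltnP i.-1 (size V)) => Hi; first by apply: (allP Hpos); exact: mem_nth.
by rewrite nth_default //; apply: (allP Hpos); exact: last_in.
Qed.

Lemma Pv_pos j : 0 < Pv j.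
Proof. exact: prodn_gt0 (fun i => vv_pos i). Qed.

Lemma PvS j : Pv j.+1 = Pv j * vv V j.+1.
Proof. by rewrite /Pv big_nat_recr. Qed.

Lemma kcard x j : #|kpreds e j x| = (j <= h x) * Pv j.
Proof.
case: (leqP j (h x)) => Hj; rewrite ?mul1n ?mul0n.
- case: j Hj => [|j] Hj.
  + rewrite /Pv big_geq // /kpreds.
    rewrite (_ : [set c | dpath e 0 c x] = [set x]) ?cards1 //.
    by apply/setP => c; rewrite !inE.
  + have [c p] := h_att Hj.
    case: (Hreg (ltn0Sn j) x) => // /eqP; rewrite cards_eq0 => /eqP E.
    by have := in_set0 c; rewrite -E inE p.
- apply/eqP; rewrite cards_eq0; apply/eqP/setP => c; rewrite !inE.
  by apply/negbTE/negP => /h_max; rewrite leqNgt Hj.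
Qed.

Lemma kpredsS x j : #|kpreds e j.+1 x| = \sum_(y | e y x) #|kpreds e j y|.
Proof.
have ck i z : #|kpreds e i z| = \sum_c (dpath e i c z : nat) by exact: (card_sum (fun c => dpath e i c z)).
rewrite ck; transitivity (\sum_(y | e y x) \sum_c (dpath e j c y : nat)); last by apply: eq_bigr => y _; rewrite ck.
symmetry.
rewrite exchange_big /=; apply: eq_bigr => c _.
rewrite -[X in _ = nat_of_bool X]/(dpath e j.+1 c x) -[j.+1]addn1 dpath_add.
set y0 := iter j par c.
case Ey0: (e y0 x).
- rewrite (bigD1 y0 Ey0) /= big1 => [|y /andP[_ yn]]; last first.
    by case: (boolP (dpath e j c y)) => // /dpath_iter E; rewrite -/y0 E eqxx in yn.
  rewrite addn0; congr (nat_of_bool _); apply/idP/existsP => [p|[z /andP[p _]]].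
    by exists y0; rewrite p; apply/existsP; exists x; rewrite Ey0 eqxx.
  by rewrite /y0 -(dpath_iter p).
- rewrite big1 => [|y eyx].
    case: existsP => // -[z /andP[p]].
    by rewrite dpath1 (dpath_iter p) -/y0 Ey0.
  case: (boolP (dpath e j c y)) => // /dpath_iter E.
  by move: eyx; rewrite E -/y0 Ey0.
Qed.

Lemma h_child y x : e y x -> h y < h x.
Proof.
move=> eyx; have [c p] := h_att (leqnn (h y)).
apply: (@h_max x _ c); rewrite -addn1 dpath_add; apply/existsP; exists y.
by rewrite p dpath1.
Qed.

Definition code x y := keyH (h x) (h y) * #|T| + enum_rank y.
Definition chs x := sort (fun a b => code x a <= code x b) [seq y <- index_enum T | e y x].

Lemma mem_chs x y : (y \in chs x) = e y x.
Proof. by rewrite mem_sort mem_filter mem_index_enum andbT. Qed.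

Lemma uniq_chs x : uniq (chs x).
Proof. by rewrite sort_uniq filter_uniq // index_enum_uniq. Qed.

Lemma sum_chs x (F : T -> nat) : \sum_(y | e y x) F y = \sum_(y <- chs x) F y.
Proof. by rewrite -big_filter; apply: perm_big; rewrite perm_sym perm_sort. Qed.

Lemma cnt_ge x j : count (fun y => j <= h y) (chs x) = (j < h x) * vv V j.+1.
Proof.
have := kpredsS x j; rewrite !kcard sum_chs.
under eq_bigr do rewrite kcard.
rewrite -big_distrl /= sum_count PvS => E.
apply/eqP; rewrite -(eqn_pmul2r (Pv_pos j)); apply/eqP; rewrite -E; lia.
Qed.


Lemma cnt_mem x g :
  count (pred1 g) (map h (chs x)) = (g < h x) * vv V g.+1 - (g.+1 < h x) * vv V g.+2.
Proof.
have := count_split (map h (chs x)) g; rewrite !count_map.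
rewrite (eq_count (a2 := fun y => g <= h y)) // (eq_count (a1 := preim h (fun t => g < t)) (a2 := fun y => g.+1 <= h y)) //.
rewrite !cnt_ge; lia.
Qed.

Lemma perm_chs x : perm_eq (map h (chs x)) (thl V (h x)).
Proof. by apply/allP => g _ /=; rewrite cnt_mem count_thl. Qed.

Lemma chs_heights x : map h (chs x) = thl V (h x).
Proof.
have Hp := perm_chs x.
have A1 : all (fun g => g < h x) (map h (chs x)).
  by rewrite all_map; apply/allP => y; rewrite mem_chs => /h_child.
have A2 : all (fun g => g < h x) (thl V (h x)) by rewrite -(perm_all _ Hp).
have E : map (keyH (h x)) (map h (chs x)) = map (keyH (h x)) (thl V (h x)).
  apply: (sorted_eq leq_trans anti_leq); last by rewrite perm_map.
    rewrite -map_comp sorted_map.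
    apply: sub_sorted (sort_sorted _ _) => [a b /= Hab|a b]; last exact: leq_total.
    by apply: (code_le (ltn_ord (enum_rank a)) (ltn_ord (enum_rank b))).
  exact: sorted_keys_thl.
transitivity (map (keyinv (h x) \o keyH (h x)) (map h (chs x))).
  by rewrite map_id_in // => g /(allP A1) /keyK.
by rewrite map_comp E -map_comp map_id_in // => g /(allP A2) /keyK.
Qed.

Definition step x i := if i < size (chs x) then Some (nth x (chs x) i) else None.

Fixpoint walk x (a : seq nat) : option T :=
  if a is i :: a' then (if step x i is Some c then walk c a' else None) else Some x.

Lemma W1 a x : (a \in addrs (TV V (h x))) = isSome (walk x a).
Proof.
elim: a x => [|i a IH] x; first by rewrite nil_addrs.
rewrite TV_eq -chs_heights -map_comp mem_addrs size_map /= /step.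
by case: ifP => //= Hi; rewrite (nth_map x) // IH.
Qed.

Definition idx y := index y (chs (par y)).

Fixpoint addr n y := if n is n'.+1 then rcons (addr n' (par y)) (idx y) else [::].
Definition ad y := addr (dep y) y.

Lemma walk_rcons x a i : walk x (rcons a i) = if walk x a is Some z then step z i else None.
Proof.
elim: a x => [|j a IH] x /=; first by case: step.
by case: step.
Qed.

Lemma W2 n y : dep y = n -> walk r (addr n y) = Some y.
Proof.
elim: n y => [|n IH] y Hd /=; first by rewrite (dep0 Hd).
have yr : y != r by apply/eqP => E; move: Hd; rewrite E dep_r.
rewrite walk_rcons IH; last by move: Hd; rewrite depS // => -[].
have ey := par_edge yr.
by rewrite /step /idx index_mem mem_chs ey nth_index // mem_chs.
Qed.

Lemma W2' y : walk r (ad y) = Some y.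
Proof. exact: W2. Qed.

Lemma W3 a y : walk r a = Some y -> ad y = a.
Proof.
elim/last_ind: a y => [|a i IH] y /=; first by move=> [<-]; rewrite /ad dep_r.
rewrite walk_rcons; case Hw: (walk r a) => [z|//]; rewrite /step; case: ifP => // Hi [Ey].
have yin : y \in chs z by rewrite -Ey mem_nth.
have ey : e y z by rewrite -mem_chs.
have pz : par y = z by rewrite -(edge_par ey).
rewrite /ad depS ?(edge_neq ey) //= pz -/(ad z) (IH _ Hw) /idx pz -Ey index_uniq //.
exact: uniq_chs.
Qed.

Lemma ad_inj y1 y2 : ad y1 = ad y2 -> y1 = y2.
Proof. by move=> E; have := W2' y1; rewrite E W2' => -[]. Qed.

Lemma ad_nonroot x : x != r -> ad x = rcons (ad (par x)) (idx x).
Proof. by move=> xr; rewrite /ad depS. Qed.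

Lemma h_r : h r = k.
Proof.
case: Hdep => [[c p] Hk]; apply/eqP; rewrite eqn_leq (h_max p) andbT.
have [c' p'] := h_att (leqnn (h r)); exact: Hk p'.
Qed.

Lemma mem_ad y : ad y \in addrs (TV V k).
Proof. by rewrite -h_r W1 W2'. Qed.

Definition fiso y : rvert (TV V k) := SeqSub (mem_ad y).
Definition giso (a : rvert (TV V k)) : T := odflt r (walk r (val a)).

Lemma tk (s : seq nat) i : take (size (rcons s i)).-1 (rcons s i) = s.
Proof. by rewrite size_rcons -cats1 take_size_cat. Qed.

Lemma main_iso : rtree_iso e r (TV V k).
Proof.
exists fiso; split.
- exists giso => [y|[a Ha]]; rewrite /giso.
    by rewrite /fiso /= W2'.
  apply: val_inj => /=; move: (Ha); rewrite -h_r W1.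
  by case Hw: (walk r a) => [y|] //= _; exact: W3 Hw.
- by rewrite /fiso /= /ad dep_r.
- move=> x y; rewrite /redge /=.
  apply/idP/andP => [exy|[nz /eqP E]].
    have xr := edge_neq exy; rewrite (ad_nonroot xr) -(edge_par exy).
    split; first by case: (ad y).
    by apply/eqP; symmetry; exact: tk.
  have xr : x != r by apply: contraNneq nz => ->; rewrite /ad dep_r.
  move: E; rewrite (ad_nonroot xr) => E.
  have E' : ad y = ad (par x) by rewrite E; exact: tk.
  rewrite (ad_inj E').
  exact: par_edge.
Qed.

End Main.

Theorem lemma3p2 (V : seq nat) (T : finType) (e : rel T) (r : T) (k : nat) :
  nonincr_pos_seq V ->
  rooted_tree e r ->
  V_regular V e ->
  depth_is e r k ->
  rtree_iso e r (TV V k).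
Proof. exact: main_iso. Qed.
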